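(* Let $f,g:(0,\infty)\to\mathbb{R}$ be convex functions with $f(1)=g(1)=0$. (i) If $f(0)=\infty$ and $\liminf_{t\to0}\frac{g(t)}{f(t)}=\beta_0$, then for every $\beta>\beta_0$, \[ \sup_{P,Q}\bigl(\beta\, D_f(P,Q)-D_g(P,Q)\bigr)=\infty, \] the supremum being over all pairs of probability distributions $P,Q$ (on a common space). (ii) If $f^{\ast}(0)=\infty$ and $\liminf_{t\to\infty}\frac{g(t)}{f(t)}=\beta_0$, then for every $\beta>\beta_0$, $\sup_{P,Q}\bigl(\beta\, D_f(P,Q)-D_g(P,Q)\bigr)=\infty$.
   Context: For a convex function $f:(0,\infty)\to\mathbb{R}$ with $f(1)=0$, set $f(0)=\lim_{t\to0}f(t)$, $f^{\ast}(t)=tf(t^{-1})$ and $f^{\ast}(0)=\lim_{t\to\infty}f(t)/t$ (values in $(-\infty,\infty]$). If $P,Q$ are probability measures absolutely continuous with respect to a measure $\mu$ with densities $p=dP/d\mu$, $q=dQ/d\mu$, the $f$-divergence is $D_f(P,Q)=\int_{\{q>0\}} f(p/q)\,dQ+f^{\ast}(0)\,P(q=0)$. *)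

(* Defs.v *)
From HB Require Import structures.
From mathcomp Require Import all_boot all_order all_algebra.
From mathcomp Require Import all_classical all_reals all_analysis.
Set Implicit Arguments. Unset Strict Implicit. Unset Printing Implicit Defensive.
Import Order.TTheory GRing.Theory Num.Theory.
Import numFieldNormedType.Exports.
Local Open Scope classical_set_scope.
Local Open Scope ring_scope.
Local Open Scope ereal_scope.

Section fdiv.
Variable R : realType.

Definition convex_pos (f : R -> R) : Prop :=
  convex_function (E := R^o) [set x : R^o | (0 < x)%R] f.

Definition f_at0 (f : R -> R) : \bar R := lim ((f t)%:E @[t --> 0%R^'+]).

Definition fstar_at0 (f : R -> R) : \bar R :=
  lim ((f t / t)%:E @[t --> +oo%R]).

Definition fext (f : R -> R) (t : R) : \bar R :=
  if (0 < t)%R then (f t)%:E else f_at0 f.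

Definition is_density d (T : measurableType d) (mu : {measure set T -> \bar R})
  (p : T -> R) : Prop :=
  measurable_fun setT p /\ (forall x, (0 <= p x)%R) /\
  \int[mu]_x (p x)%:E = 1.

Definition fdiv (f : R -> R) d (T : measurableType d)
  (mu : {measure set T -> \bar R}) (p q : T -> R) : \bar R :=
  \int[mu]_(x in [set x | (0 < q x)%R]) (fext f (p x / q x) * (q x)%:E)
  + fstar_at0 f * \int[mu]_(x in [set x | q x = 0%R]) (p x)%:E.

Definition beta_diff_values (f g : R -> R) (beta : R) : set (\bar R) :=
  [set v | exists (d : measure_display) (T : measurableType d)
      (mu : {measure set T -> \bar R}) (p q : T -> R),
      is_density mu p /\ is_density mu q /\
      v = beta%:E * fdiv f mu p q - fdiv g mu p q].

End fdiv.

(* Main.v *)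
Require Import Defs.
From HB Require Import structures.
From mathcomp Require Import all_boot all_order all_algebra.
From mathcomp Require Import all_classical all_reals all_analysis.
From mathcomp Require Import ring lra.
Import Order.TTheory GRing.Theory Num.Theory.
Import numFieldNormedType.Exports.
Local Open Scope classical_set_scope.
Local Open Scope ring_scope.
Local Open Scope ereal_scope.

Section aux.
Context {R : realType}.

Definition mu3 : {measure set nat -> \bar R} := msum (fun i => @dirac _ nat i R) 3.


Lemma int_msum N (D : set nat) (h : nat -> R) :
  \int[msum (fun i => @dirac _ nat i R) N]_(x in D) (h x)%:E =
  (\sum_(i < N) ((nat_of_ord i \in D)%:R * h i))%R%:E.
Proof.
rewrite integralE !ge0_integral_measure_sum //.
under eq_bigr do rewrite integral_dirac // diracE funeposE -EFin_max -EFinM.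
under [X in _ - X]eq_bigr do rewrite integral_dirac // diracE funenegE -EFinN -EFin_max -EFinM.
rewrite !sumEFin -EFinB -sumrB; congr EFin; apply: eq_bigr => i _.
rewrite -mulrBr; congr (_ * _)%R.
have [h0|h0] := leP 0%R (h i).
  by rewrite (max_idPr _) ?subr0 // oppr_le0.
by rewrite (max_idPl _) ?sub0r ?opprK // oppr_ge0 ltW.
Qed.

Definition pt3 (x0 x1 x2 : R) : nat -> R := fun n =>
  if n == 0%N then x0 else if n == 1%N then x1 else if n == 2%N then x2 else 0%R.

Lemma fdiv3 (f : R -> R) (a b c pa pb pc : R) :
  (0 < a)%R -> (0 < b)%R -> (0 < c)%R -> (0 < pa)%R -> (0 < pb)%R -> (0 < pc)%R ->
  fdiv f mu3 (pt3 pa pb pc) (pt3 a b c) =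
  (f (pa / a) * a + f (pb / b) * b + f (pc / c) * c)%R%:E.
Proof.
move=> a0 b0 c0 pa0 pb0 pc0.
rewrite /fdiv.
rewrite (eq_integral (fun x => (f (pt3 pa pb pc x / pt3 a b c x) * pt3 a b c x)%R%:E)); last first.
  move=> x /[!inE]; rewrite /fext.
  case: x => [|[|[|x]]] //= qx; rewrite ?divr_gt0 //; by rewrite ltxx in qx.
rewrite /mu3 !int_msum !big_ord_recl !big_ord0 /= /bump /= /pt3 /=.
have H1 (x : nat) (P : set nat) : P x -> (x \in P)%:R = 1%R :> R.
  by move=> Px; rewrite mem_set.
have H0 (x : nat) (P : set nat) : ~ P x -> (x \in P)%:R = 0%R :> R.
  by move=> Px; rewrite memNset.
rewrite (H1 0%N [set x | 0 < _]%R) // (H1 1%N [set x | 0 < _]%R) // (H1 2%N [set x | 0 < _]%R) //.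
rewrite (H0 0%N [set x | _ = 0]%R) /=; last by move=> /eqP; rewrite gt_eqF.
rewrite (H0 1%N [set x | _ = 0]%R) /=; last by move=> /eqP; rewrite gt_eqF.
rewrite (H0 2%N [set x | _ = 0]%R) /=; last by move=> /eqP; rewrite gt_eqF.
rewrite !mul0r !add0r mule0 adde0 !mul1r addr0 addrA //.
Qed.

Lemma dens3 (a b c : R) : (0 < a)%R -> (0 < b)%R -> (0 < c)%R -> (a + b + c = 1)%R ->
  is_density mu3 (pt3 a b c).
Proof.
move=> a0 b0 c0 s1; split; first by move=> ? ? ?.
split.
  by case=> [|[|[|x]]] //=; rewrite /pt3 /= ltW.
rewrite /mu3 int_msum !big_ord_recl !big_ord0 /= /bump /= /pt3 /=.
by rewrite !in_setT !mul1r addr0 addrA s1.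
Qed.

Definition V3 (f : R -> R) (a b c pa pb pc : R) : R :=
  (f (pa / a) * a + f (pb / b) * b + f (pc / c) * c)%R.

Lemma in_bdv (f g : R -> R) (beta : R) (a b c pa pb pc : R) :
  (0 < a)%R -> (0 < b)%R -> (0 < c)%R -> (0 < pa)%R -> (0 < pb)%R -> (0 < pc)%R ->
  (a + b + c = 1)%R -> (pa + pb + pc = 1)%R ->
  beta_diff_values f g beta
    ((beta * V3 f a b c pa pb pc - V3 g a b c pa pb pc)%R%:E).
Proof.
move=> a0 b0 c0 pa0 pb0 pc0 s1 s2.
exists default_measure_display, nat, mu3, (pt3 pa pb pc), (pt3 a b c).
split; first exact: dens3.
split; first exact: dens3.
by rewrite !fdiv3 // EFinB EFinM.
Qed.

Lemma lim_py (F : set_system (\bar R)) : lim F = +oo -> F --> +oo.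
Proof.
rewrite /lim /lim_in; case: xgetP => [x -> Fx <- //|_ /eqP].
by rewrite /point /=.
Qed.

Lemma liminf_lt (X : filteredType R) (h : X -> \bar R) (F : set_system X) (b : \bar R)
  (V : set X) : limf_einf h F < b -> F V -> exists2 x, V x & h x < b.
Proof.
rewrite limf_einfE => H FV.
have : ereal_inf (h @` V) < b.
  by apply: le_lt_trans H; apply: ereal_sup_ubound; exists V.
by move=> /ereal_inf_lt [y [x Vx <-] hx]; exists x.
Qed.

Lemma sup_py (S : set (\bar R)) :
  (forall M : R, exists2 v, S v & M%:E <= v) -> ereal_sup S = +oo.
Proof.
move=> H; case E: (ereal_sup S) => [r| |] //.
  have [v Sv Mv] := H (r + 1)%R.
  have := ereal_sup_ubound Sv; rewrite E => vr.
  have : (r + 1 <= r)%R by rewrite -lee_fin (le_trans Mv vr).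
  by move=> h; exfalso; clear Mv vr Sv E H; lra.
have [v Sv Mv] := H 0%R.
have := ereal_sup_ubound Sv; rewrite E leeNy_eq => /eqP vNy.
by rewrite vNy in Mv.
Qed.

Lemma mid (beta0 : \bar R) (beta : R) : beta0 < beta%:E ->
  exists2 b' : R, beta0 < b'%:E & (b' < beta)%R.
Proof.
case: beta0 => [r| |] //=.
- rewrite lte_fin => rb; exists ((r + beta) / 2)%R; rewrite ?lte_fin; lra.
- by move=> _; exists (beta - 1)%R; rewrite ?ltNye //; lra.
Qed.
End aux.

Theorem lemma2 (R : realType) (f g : R -> R)
  (hf : convex_pos f) (hg : convex_pos g) (f1 : f 1%R = 0%R) (g1 : g 1%R = 0%R) :
  (forall beta0 : \bar R,
     f_at0 f = +oo ->
     limf_einf (fun t => (g t / f t)%:E) (0%R^'+) = beta0 ->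
     forall beta : R, beta0 < beta%:E ->
       ereal_sup (beta_diff_values f g beta) = +oo)
  /\
  (forall beta0 : \bar R,
     fstar_at0 f = +oo ->
     limf_einf (fun t => (g t / f t)%:E) (+oo%R) = beta0 ->
     forall beta : R, beta0 < beta%:E ->
       ereal_sup (beta_diff_values f g beta) = +oo).
Proof.
split.
- move=> beta0 hf0 hb0 beta lt.
  have [b' hb1 hb2] := @mid _ _ _ lt.
  have cf := lim_py _ hf0; move/cvgeyPge in cf.
  apply: sup_py => M.
  pose X := (beta * f 2 - g 2)%R.
  pose C := `|X|%R.
  pose K := (`|2 * (M + C) / (beta - b')| + 1)%R.
  have Hnear : \forall t \near 0%R^'+, (K%:E <= (f t)%:E) /\ (0 < t)%R /\ (t < 1)%R.
    exact: (filterI (cf K) (filterI (nbhs_right_gt 0%R) (nbhs_right_lt ltr01))).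
  have hb1' : limf_einf (fun t => (g t / f t)%:E) (0%R^'+) < b'%:E by rewrite hb0.
  have := liminf_lt _ _ _ _ _ hb1' Hnear.
  case=> t /= [Kt [t0 t1]] gt.
  rewrite lee_fin in Kt; rewrite lte_fin in gt.
  have K1 : (1 <= K)%R by rewrite /K lerDr.
  have ft0 : (0 < f t)%R by apply: lt_le_trans Kt; apply: lt_le_trans K1.
  rewrite ltr_pdivrMr // in gt.
  exists ((beta * V3 f (1/2) ((1-t)/2) (t/2) (t/2) (1-t) (t/2)
          - V3 g (1/2) ((1-t)/2) (t/2) (t/2) (1-t) (t/2))%R%:E).
    apply: in_bdv; lra.
  rewrite lee_fin /V3.
  have e1 : ((t/2) / (1/2) = t)%R by field.
  have e2 : ((1 - t) / ((1 - t)/2) = 2)%R by field; lra.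
  have e3 : ((t/2) / (t/2) = 1)%R by field; lra.
  rewrite e1 e2 e3 f1 g1.
  have db : (0 < beta - b')%R by lra.
  have F2 : ((beta - b') * K <= (beta - b') * f t)%R by rewrite ler_wpM2l // ltW.
  have F3 : (2 * (M + C) <= (beta - b') * K)%R.
    have : (2 * (M + C) <= (beta - b') * `|2 * (M + C) / (beta - b')|)%R.
      rewrite -{1}(divfK (lt0r_neq0 db) (2 * (M + C))%R) mulrC.
      by apply: ler_wpM2l; [exact: ltW | exact: ler_norm].
    rewrite /K; move: (`|2 * (M + C) / (beta - b')|%R) => y; lra.
  have C0 : (0 <= C)%R by exact: normr_ge0.
  have XC : (- C <= X)%R by rewrite /C lerNnormlW.
  have F4a : (0 <= (1 - t) * (X + C))%R by apply: mulr_ge0; lra.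
  have F4b : (0 <= t * C)%R by apply: mulr_ge0; lra.
  rewrite /X in F4a XC; clear -gt F2 F3 F4a F4b C0 db t0 t1.
  lra.
- move=> beta0 hf0 hb0 beta lt.
  have [b' hb1 hb2] := @mid _ _ _ lt.
  have cf := lim_py _ hf0; move/cvgeyPge in cf.
  apply: sup_py => M.
  pose X := (beta * f (1/2) - g (1/2))%R.
  pose C := `|X|%R.
  pose K := (`|2 * (M + C) / (beta - b')| + 1)%R.
  have Hnear : \forall t \near +oo%R, (K%:E <= (f t / t)%:E) /\ (1 < t)%R.
    exact: (filterI (cf K) (nbhs_pinfty_gt (num_real 1%R))).
  have hb1' : limf_einf (fun t => (g t / f t)%:E) (+oo%R) < b'%:E by rewrite hb0.
  have := liminf_lt _ _ _ _ _ hb1' Hnear.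
  case=> t /= [Kt t1] gt.
  rewrite lee_fin in Kt; rewrite lte_fin in gt.
  have K1 : (1 <= K)%R by rewrite /K lerDr.
  have t0 : (0 < t)%R by lra.
  have u0 : (0 < f t / t)%R by apply: lt_le_trans Kt; apply: lt_le_trans K1.
  have ft0 : (0 < f t)%R by rewrite ltr_pdivlMr // mul0r in u0.
  rewrite ltr_pdivrMr // in gt.
  pose w := (t^-1)%R.
  have w0 : (0 < w)%R by rewrite /w invr_gt0.
  have w1 : (w < 1)%R by rewrite /w invf_lt1.
  exists ((beta * V3 f (w/2) (1-w) (w/2) (1/2) ((1-w)/2) (w/2)
          - V3 g (w/2) (1-w) (w/2) (1/2) ((1-w)/2) (w/2))%R%:E).
    apply: in_bdv; lra.
  rewrite lee_fin /V3.
  have e1 : ((1/2) / (w/2) = t)%R by rewrite /w; field; lra.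
  have e2 : (((1 - w)/2) / (1 - w) = 1/2)%R by field; lra.
  have e3 : ((w/2) / (w/2) = 1)%R by field; lra.
  rewrite e1 e2 e3 f1 g1.
  have db : (0 < beta - b')%R by lra.
  have G1 : (g t * w < b' * f t * w)%R by rewrite ltr_pM2r.
  have F2 : ((beta - b') * K <= (beta - b') * (f t * w))%R by rewrite ler_wpM2l // ltW.
  have F3 : (2 * (M + C) <= (beta - b') * K)%R.
    have : (2 * (M + C) <= (beta - b') * `|2 * (M + C) / (beta - b')|)%R.
      rewrite -{1}(divfK (lt0r_neq0 db) (2 * (M + C))%R) mulrC.
      by apply: ler_wpM2l; [exact: ltW | exact: ler_norm].
    rewrite /K; move: (`|2 * (M + C) / (beta - b')|%R) => y; lra.
  have C0 : (0 <= C)%R by exact: normr_ge0.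
  have XC : (- C <= X)%R by rewrite /C lerNnormlW.
  have F4a : (0 <= (1 - w) * (X + C))%R by apply: mulr_ge0; lra.
  have F4b : (0 <= w * C)%R by apply: mulr_ge0; lra.
  rewrite /X in F4a XC; clear -G1 F2 F3 F4a F4b C0 db w0 w1.
  lra.
Qed.
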